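(* Consider a dynamical system $\dot{x} = F(x)$, $x \in \mathbb{R}^n$, with $F$ locally Lipschitz, where the state is partitioned as $x = (x_1^T, x_2^T, \dots, x_m^T)^T$ with $x_i \in \mathbb{R}^{n_i}$ and $\sum_{i=1}^m n_i = n$. For each $i \in \{1,\dots,m\}$ let $v_i : \mathbb{R}^{n_i} \to \mathbb{R}$ be a continuously differentiable positive definite function (a Lyapunov function: $v_i(0)=0$ and $v_i(x_i) > 0$ for $x_i \neq 0$), and let $v(x) = (v_1(x_1), \dots, v_m(x_m))^T$. Let $\mathcal{D} \subseteq \mathbb{R}^n$ be a domain. Suppose there is a matrix $\tilde{A} = [\tilde{a}_{ij}] \in \mathbb{R}^{m \times m}$ with $\tilde{a}_{ij} \geq 0$ for all $i \neq j$ and $\sum_{j=1}^m \tilde{a}_{ij} < 0$ for all $i$, such that $$\dot{v}(x) \leq \tilde{A}\, v(x) \quad \text{(componentwise) for all } x \in \mathcal{D},$$ where $\dot{v}_i(x) = \nabla v_i(x_i)^T F_i(x)$ denotes the derivative of $v_i$ along the dynamics and $F_i$ is the block of $F$ corresponding to $x_i$. Define $V_i := v_i^2$ for each $i$ and $V(x) = (V_1(x_1), \dots, V_m(x_m))^T$. Then there exists a matrix $A = [a_{ij}] \in \mathbb{R}^{m\times m}$ such that $$\dot{V}(x) \leq A\, V(x) \quad \text{(componentwise) for all } x \in \mathcal{D},$$ with $a_{ij} \geq 0$ for all $i \neq j$ and $\sum_{j=1}^m a_{ij} < \sum_{j=1}^m \tilde{a}_{ij} < 0$ for all $i$.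
   Context: Inequalities between vectors are understood componentwise. $\nabla v_i$ denotes the gradient of $v_i$ with respect to $x_i$, and $\dot{V}_i(x) = \nabla V_i(x_i)^T F_i(x)$ is the derivative of $V_i$ along trajectories of $\dot{x}=F(x)$. *)

(* Defs.v *)
From HB Require Import structures.
From mathcomp Require Import all_boot all_order all_algebra.
From mathcomp Require Import all_classical all_reals all_analysis.
Set Implicit Arguments. Unset Strict Implicit. Unset Printing Implicit Defensive.
Import Order.TTheory GRing.Theory Num.Theory.
Import numFieldNormedType.Exports.
Local Open Scope classical_set_scope.
Local Open Scope ring_scope.

(* The full state space R^N with N = \sum_i n_i, as row vectors; the block
   x_i of x is [submxrow x i : 'rV_(n i)]. *)
Definition block {R : realType} {m : nat} {n : 'I_m -> nat}
  (x : 'rV[R]_(\sum_(i < m) n i)) (i : 'I_m) : 'rV[R]_(n i) := submxrow x i.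

Definition locally_lipschitz {R : realType} {N : nat}
  (F : 'rV[R]_N -> 'rV[R]_N) : Prop :=
  forall x : 'rV[R]_N, exists r : R, 0 < r /\ exists L : R,
    forall y z, ball x r y -> ball x r z -> `|F y - F z| <= L * `|y - z|.

Definition C1 {R : realType} {k : nat} (f : 'rV[R]_k -> R) : Prop :=
  (forall y, differentiable f y) /\
  (forall u : 'rV[R]_k, continuous (fun y => 'd f y u)).

Definition pos_def {R : realType} {k : nat} (f : 'rV[R]_k -> R) : Prop :=
  f 0 = 0 /\ forall y, y != 0 -> 0 < f y.

Definition domain {R : realType} {N : nat} (D : set 'rV[R]_N) : Prop :=
  D !=set0 /\ open D /\ connected D.

Definition lie_deriv {R : realType} {m : nat} {n : 'I_m -> nat}
  (F : 'rV[R]_(\sum_(i < m) n i) -> 'rV[R]_(\sum_(i < m) n i))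
  (i : 'I_m) (f : 'rV[R]_(n i) -> R) (x : 'rV[R]_(\sum_(i < m) n i)) : R :=
  'd f (block x i) (block (F x) i).

(* Main.v *)
Require Import Defs.
From HB Require Import structures.
From mathcomp Require Import all_boot all_order all_algebra.
From mathcomp Require Import all_classical all_reals all_analysis.
From mathcomp Require Import ring lra.
Import Order.TTheory GRing.Theory Num.Theory.
Import numFieldNormedType.Exports.
Local Open Scope classical_set_scope.
Local Open Scope ring_scope.

Theorem lemma2 (R : realType) (m : nat) (n : 'I_m -> nat)
  (F : 'rV[R]_(\sum_(i < m) n i) -> 'rV[R]_(\sum_(i < m) n i))
  (v : forall i : 'I_m, 'rV[R]_(n i) -> R)
  (D : set 'rV[R]_(\sum_(i < m) n i))
  (At : 'M[R]_m) :
  locally_lipschitz F ->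
  (forall i, C1 (v i)) ->
  (forall i, pos_def (v i)) ->
  domain D ->
  (forall i j, i != j -> 0 <= At i j) ->
  (forall i, \sum_(j < m) At i j < 0) ->
  (forall x, D x -> forall i,
     lie_deriv F (v i) x <= \sum_(j < m) At i j * v j (block x j)) ->
  exists A : 'M[R]_m,
    (forall x, D x -> forall i,
       lie_deriv F (fun y => (v i y) ^+ 2) x
         <= \sum_(j < m) A i j * (v j (block x j)) ^+ 2) /\
    (forall i j, i != j -> 0 <= A i j) /\
    (forall i, \sum_(j < m) A i j < \sum_(j < m) At i j /\
               \sum_(j < m) At i j < 0).
Proof.
move=> _ hC1 hpd _ hoff hneg hder.
exists (\matrix_(i, j) (At i j + (i == j)%:R * \sum_(k < m) At i k)).
split; last split.
- move=> x Dx i.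
  have hv : forall j, 0 <= v j (block x j).
    move=> j; have [h0 hp] := hpd j.
    by case: (eqVneq (block x j) 0) => [->|/hp/ltW //]; rewrite h0.
  rewrite /lie_deriv.
  have -> : (fun y => v i y ^+ 2) = (v i ^+ 2) by apply: funext => y; rewrite exprfctE.
  rewrite diffX; last by case: (hC1 i).
  rewrite /= expr1.
  apply: (le_trans (y := 2%:R * v i (block x i) * \sum_(j < m) At i j * v j (block x j))).
    by rewrite ler_wpM2l ?mulr_ge0 // hder.
  rewrite big_distrr /=.
  have -> : \sum_(j < m) (\matrix_(i0, j0) (At i0 j0 + (i0 == j0)%:R * \sum_(k < m) At i0 k)) i j * v j (block x j) ^+ 2
     = \sum_(j < m) At i j * (v j (block x j) ^+ 2 + v i (block x i) ^+ 2).
    rewrite (eq_bigr (fun j => At i j * v j (block x j) ^+ 2 + ((i == j)%:R * \sum_(k < m) At i k) * v j (block x j) ^+ 2)); last first.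
      by move=> j _; rewrite mxE mulrDl.
    rewrite big_split /=.
    under [RHS]eq_bigr => j _ do rewrite mulrDr.
    rewrite [RHS]big_split /= -big_distrl /=; congr (_ + _).
    rewrite (bigD1 i) //= eqxx mul1r [X in _ + X]big1 ?addr0 // => j /negPf; rewrite eq_sym => ->.
    by rewrite !mul0r.
  apply: ler_sum => j _.
  have [->|nij] := eqVneq j i.
    by rewrite le_eqVlt; apply/orP; left; apply/eqP; ring.
  have := hoff i j; rewrite eq_sym nij => /(_ isT) h.
  rewrite mulrCA ler_wpM2l //.
  set a := v i _; set b := v j _.
  rewrite -subr_ge0.
  have -> : b ^+ 2 + a ^+ 2 - 2%:R * a * b = (a - b) ^+ 2 by ring.
  exact: sqr_ge0.
- by move=> i j nij; rewrite mxE (negPf nij) mul0r addr0 hoff.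
- move=> i; split; last exact: hneg.
  rewrite (eq_bigr (fun j => At i j + (i == j)%:R * \sum_(k < m) At i k)); last by move=> j _; rewrite mxE.
  rewrite big_split /= -big_distrl /=.
  have -> : \sum_(j < m) ((i == j)%:R : R) = 1.
    rewrite (bigD1 i) //= eqxx big1; first by rewrite addr0.
    by move=> j; rewrite eq_sym => /negPf ->.
  rewrite mul1r -[X in _ < X]addr0 ltrD2l; exact: hneg.
Qed.
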